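(* Let $\mathcal A$ be a transitive Lie algebroid with kernel $\mathcal L$, let $\phi:\mathcal A\to\mathfrak D(E)$ be a representation of $\mathcal A$ on a vector bundle $E\to M$ and $\phi_{\mathcal L}=\phi\circ\iota$. Let $\widehat\omega\in\Omega^1(\mathcal A,\mathcal L)$ be a (generalized) connection with reduced kernel endomorphism $\tau$, $\mathring\omega$ a background ordinary connection, and $\omega=\widehat\omega+\tau\circ\mathring\omega$ the induced ordinary connection with splitting $\nabla$; let $\widehat C(X)=X+\iota\widehat\omega(X)$. Then $\varphi\mapsto\widehat\nabla^E\varphi$, $(\widehat\nabla^E\varphi)(X)=\phi(\widehat C(X))\varphi$, defines a covariant derivative $\widehat\nabla^E:\Gamma(E)\to\Omega^1(\mathcal A,E)$ (i.e. $C^\infty(M)$-linear in $X$ and $\widehat\nabla^E_X(f\varphi)=f\widehat\nabla^E_X\varphi+(\rho(X)f)\varphi$), and $$(\widehat\nabla^E\varphi)(X)=\phi(\nabla_{\rho(X)})\varphi-\phi_{\mathcal L}\big(\tau(\mathring\omega(X))\big)\varphi\qquad(X\in\mathcal A).$$ Moreover, under an infinitesimal gauge transformation by $\xi\in\mathcal L$ ($\widehat\omega\mapsto\widehat\omega^\xi$, $\varphi\mapsto\varphi-\phi_{\mathcal L}(\xi)\varphi$, $\mathring\omega$ fixed), each of the two terms $T$ on the right-hand side transforms homogeneously, $T\mapsto T-\phi_{\mathcal L}(\xi)T$ to first order in $\xi$.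
   Context: A transitive Lie algebroid over $M$: finitely generated projective $C^\infty(M)$-module $\mathcal A$ with Lie bracket and surjective $C^\infty(M)$-linear Lie morphism $\rho:\mathcal A\to\Gamma(TM)$, $[X,fY]=f[X,Y]+(\rho(X)f)Y$; kernel $\mathcal L=\ker\rho$, inclusion $\iota$. $\mathfrak D(E)$ is the Lie algebra of first-order differential operators $D$ on $\Gamma(E)$ whose symbol is scalar, i.e. $D(f\varphi)=fD\varphi+(X_D f)\varphi$ for a vector field $X_D$. A representation of $\mathcal A$ on $E$ is a $C^\infty(M)$-linear Lie algebra morphism $\phi:\mathcal A\to\mathfrak D(E)$ with $X_{\phi(X)}=\rho(X)$; then $\phi_{\mathcal L}=\phi\circ\iota$ takes values in $\Gamma(\mathrm{End}E)$. $\Omega^1(\mathcal A,E)$: $C^\infty(M)$-linear maps $\mathcal A\to\Gamma(E)$. A (generalized) connection is any $\widehat\omega\in\Omega^1(\mathcal A,\mathcal L)$ ($C^\infty(M)$-linear $\mathcal A\to\mathcal L$); infinitesimal gauge transformation: $\widehat\omega^\xi(X)=\widehat\omega(X)+[X,\iota\xi]+[\widehat\omega(X),\xi]$. Reduced kernel endomorphism $\tau=\widehat\omega\circ\iota+\mathrm{Id}_{\mathcal L}$, transforming as $\tau\mapsto\tau+[\tau,\xi]$. An ordinary connection is a $C^\infty(M)$-linear splitting $\nabla$ of $\rho$, with 1-form $\omega$ given by $X=\nabla_{\rho X}-\iota\omega(X)$; a background connection $\mathring\omega$ is such a 1-form, and $\widehat\omega+\tau\circ\mathring\omega$ is then an ordinary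 connection. *)

(* Defs.v *)
(* Algebraic (Lie--Rinehart / Serre--Swan) rendering of
   transitive Lie algebroids: C^oo(M) is an abstract commutative k-algebra R,
   Gamma(TM) = k-derivations of R, Gamma(E) and A are f.g. projective R-modules,
   the kernel L = ker rho is taken literally as a subset of A (iota = inclusion). *)
From HB Require Import structures.
From mathcomp Require Import all_boot all_order all_algebra.
Set Implicit Arguments. Unset Strict Implicit. Unset Printing Implicit Defensive.
Import GRing.Theory.
Local Open Scope ring_scope.

Section LieAlgebroids.
Variables (k : fieldType) (R : comAlgType k).

(* Vector fields on M = k-derivations of C^oo(M) = R. *)
Definition is_derivation (D : R -> R) : Prop :=
  [/\ forall f g, D (f + g) = D f + D g,
      forall (c : k) f, D (c *: f) = c *: D f
    & forall f g, D (f * g) = D f * g + f * D g].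

Definition fg_projective (V : lmodType R) : Prop :=
  exists (n : nat) (i : V -> 'rV[R]_n) (p : 'rV[R]_n -> V),
    [/\ forall (a : R) u v, i (a *: u + v) = a *: i u + i v,
        forall (a : R) u v, p (a *: u + v) = a *: p u + p v
      & forall v, p (i v) = v].

Definition kscale (V : lmodType R) (c : k) (v : V) : V := (c%:A : R) *: v.

Definition transitive_Lie_algebroid (A : lmodType R) (br : A -> A -> A)
  (rho : A -> R -> R) : Prop :=
  [/\ fg_projective A,
      [/\ forall X Y Z, br (X + Y) Z = br X Z + br Y Z,
          forall (c : k) X Y, br (kscale c X) Y = kscale c (br X Y),
          forall X Y, br X Y = - br Y X
        & forall X Y Z, br X (br Y Z) + br Y (br Z X) + br Z (br X Y) = 0],
      (forall X, is_derivation (rho X)) /\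
      (forall (f : R) X Y g, rho (f *: X + Y) g = f * rho X g + rho Y g),
      (forall X Y g, rho (br X Y) g = rho X (rho Y g) - rho Y (rho X g)) /\
      (forall X (f : R) Y, br X (f *: Y) = f *: br X Y + rho X f *: Y)
    &
      forall D, is_derivation D -> exists X, forall g, rho X g = D g].

(* first-order differential operator on Gamma(E) with scalar symbol XD *)
Definition first_order_op (V : lmodType R) (XD : R -> R) (D : V -> V) : Prop :=
  [/\ is_derivation XD,
      forall u v, D (u + v) = D u + D v,
      forall (c : k) v, D (kscale c v) = kscale c (D v)
    & forall (f : R) v, D (f *: v) = f *: D v + XD f *: v].

Definition representation (A V : lmodType R) (br : A -> A -> A)
  (rho : A -> R -> R) (phi : A -> V -> V) : Prop :=
  [/\ forall X, first_order_op (rho X) (phi X),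
      forall (f : R) X Y v, phi (f *: X + Y) v = f *: phi X v + phi Y v
    & forall X Y v, phi (br X Y) v = phi X (phi Y v) - phi Y (phi X v)].

(* C^oo(M)-linear maps A -> W, i.e. elements of Omega^1(A, W) *)
Definition one_form (A W : lmodType R) (w : A -> W) : Prop :=
  forall (a : R) X Y, w (a *: X + Y) = a *: w X + w Y.

(* generalized connection: element of Omega^1(A, L), L = ker rho *)
Definition gen_connection (A : lmodType R) (rho : A -> R -> R) (omh : A -> A) :=
  one_form omh /\ forall X g, rho (omh X) g = 0.

(* reduced kernel endomorphism tau = omh o iota + Id_L (meaningful on L) *)
Definition tau (A : lmodType R) (omh : A -> A) (l : A) : A := omh l + l.

Definition splitting (A : lmodType R) (rho : A -> R -> R)
  (nab : (R -> R) -> A) : Prop :=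
  (forall D, is_derivation D -> forall g, rho (nab D) g = D g) /\
  (forall (f : R) D D', is_derivation D -> is_derivation D' ->
     nab (fun g => f * D g + D' g) = f *: nab D + nab D').

Definition connection_form (A : lmodType R) (rho : A -> R -> R)
  (nab : (R -> R) -> A) (w : A -> A) : Prop :=
  forall X, X = nab (rho X) - w X.

Definition hatC (A : lmodType R) (omh : A -> A) (X : A) : A := X + omh X.
Definition cov_deriv (A V : lmodType R) (phi : A -> V -> V) (omh : A -> A)
  (psi : V) (X : A) : V := phi (hatC omh X) psi.

Definition covariant_derivative (A V : lmodType R) (rho : A -> R -> R)
  (nE : V -> A -> V) : Prop :=
  (forall psi, one_form (nE psi)) /\
  (forall (f : R) psi X, nE (f *: psi) X = f *: nE psi X + rho X f *: psi).

Definition gauge (A : lmodType R) (br : A -> A -> A) (omh : A -> A) (xi : A)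
  (X : A) : A := omh X + br X xi + br (omh X) xi.

End LieAlgebroids.

(* Main.v *)
Require Import Defs.
From HB Require Import structures.
From mathcomp Require Import all_boot all_order all_algebra.
Import GRing.Theory.
Local Open Scope ring_scope.

Lemma ac8 (M : zmodType) (a b c d e f g h : M) :
  a + (b + e + f + (c + h + g + d)) = a + (b + (c + d)) + (e + (f + (g + h))).
Proof.
rewrite -!addrA; congr (_ + (_ + _)).
rewrite (addrCA f) (addrCA e); congr (_ + _).
rewrite (addrC g d) (addrCA h) (addrCA f) (addrCA e); congr (_ + _).
by rewrite (addrC h).
Qed.

Lemma ac4 (M : zmodType) (c d h g : M) :
  c + h + g + d = c + d + (g + h).
Proof.
by rewrite -!addrA; congr (_ + _); rewrite (addrC g d) (addrCA h) (addrC h g).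
Qed.

Section Helpers.
Local Set Implicit Arguments.
Context {k : fieldType} {R : comAlgType k} {A V : lmodType R}.

Lemma lin0 {W : lmodType R} {f : A -> W} :
  (forall (a : R) X Y, f (a *: X + Y) = a *: f X + f Y) -> f 0 = 0.
Proof.
move=> H; have E := H 1 0 0; rewrite !scale1r !addr0 in E.
by apply: (addrI (f 0)); rewrite addr0 -E.
Qed.

Lemma linD {W : lmodType R} {f : A -> W} :
  (forall (a : R) X Y, f (a *: X + Y) = a *: f X + f Y) ->
  forall X Y, f (X + Y) = f X + f Y.
Proof. by move=> H X Y; have := H 1 X Y; rewrite !scale1r. Qed.

Lemma linZ {W : lmodType R} {f : A -> W} :
  (forall (a : R) X Y, f (a *: X + Y) = a *: f X + f Y) ->
  forall a X, f (a *: X) = a *: f X.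
Proof. by move=> H a X; rewrite -[a *: X]addr0 H (lin0 H) addr0. Qed.

Lemma linN {W : lmodType R} {f : A -> W} :
  (forall (a : R) X Y, f (a *: X + Y) = a *: f X + f Y) ->
  forall X, f (- X) = - f X.
Proof. by move=> H X; rewrite -scaleN1r (linZ H) scaleN1r. Qed.

Lemma kscaleE (W : lmodType R) (c : k) (v : W) : kscale c v = c%:A *: v.
Proof. by []. Qed.

Lemma rearr {a b c : A} : a = b - c -> b = a + c.
Proof. by move->; rewrite subrK. Qed.

Lemma sqA (t : k) : (t^+2)%:A = (t%:A)^+2 :> R.
Proof. by rewrite !expr2 -scalerA -scalerAl mul1r. Qed.

Lemma key (br : A -> A -> A) (rho : A -> R -> R) (phi : A -> V -> V)
 (phiOp : forall X, first_order_op (rho X) (phi X))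
 (phiL : forall f X Y v, phi (f *: X + Y) v = f *: phi X v + phi Y v)
 (phiB : forall X Y v, phi (br X Y) v = phi X (phi Y v) - phi Y (phi X v))
 (N xi : A) (psi : V) (t : k) :
 phi (N + kscale t (br N xi)) (psi - phi (kscale t xi) psi)
 = phi N psi - phi (kscale t xi) (phi N psi)
   + kscale (t^+2) (- phi (br N xi) (phi xi psi)).
Proof.
have phiL' : forall v (a : R) X Y, phi (a *: X + Y) v = a *: phi X v + phi Y v.
  by move=> v a X Y; apply: phiL.
have phiD v X Y : phi (X + Y) v = phi X v + phi Y v := linD (phiL' v) X Y.
have phiZ v a X : phi (a *: X) v = a *: phi X v := linZ (phiL' v) a X.
have vD X u w : phi X (u + w) = phi X u + phi X w.
  by have [_ -> _ _] := phiOp X.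
have vK X c w : phi X (c%:A *: w) = c%:A *: phi X w.
  by have [_ _ H _] := phiOp X; apply: H.
have vN X w : phi X (- w) = - phi X w.
  by have := vK X (-1) w; rewrite !scaleN1r.
rewrite /kscale phiD !phiZ !vD !vN !vK [phi (br N xi) psi]phiB sqA.
set r := t%:A.
rewrite scalerBr scalerBr scalerA -expr2 scalerN.
by rewrite !addrA subrK.
Qed.

Lemma brZr (br : A -> A -> A)
  (brZ : forall (c : k) X Y, br (kscale c X) Y = kscale c (br X Y))
  (brN : forall X Y, br X Y = - br Y X) (c : k) X Y :
  br X (kscale c Y) = kscale c (br X Y).
Proof. by rewrite brN brZ [br Y X]brN /kscale scalerN opprK. Qed.

End Helpers.

Theorem proposition3p8 (k : fieldType) (R : comAlgType k) (A V : lmodType R)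
  (br : A -> A -> A) (rho : A -> R -> R) (phi : A -> V -> V)
  (omh omr : A -> A) (nab nabr : (R -> R) -> A) :
  transitive_Lie_algebroid br rho ->
  fg_projective V ->
  representation br rho phi ->
  gen_connection rho omh ->
  (* background ordinary connection omr, with splitting nabr *)
  splitting rho nabr -> connection_form rho nabr omr ->
  (* nab : splitting of the induced ordinary connection omh + tau o omr *)
  splitting rho nab -> connection_form rho nab (fun X => omh X + tau omh (omr X)) ->
  [/\ covariant_derivative rho (cov_deriv phi omh),
      (forall psi X, cov_deriv phi omh psi X
                     = phi (nab (rho X)) psi - phi (tau omh (omr X)) psi)
    & forall xi : A, (forall g, rho xi g = 0) ->
      forall nabt : k -> (R -> R) -> A,
      (forall t : k, splitting rho (nabt t) /\
         connection_form rho (nabt t)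
           (fun X => gauge br omh (kscale t xi) X
                     + tau (gauge br omh (kscale t xi)) (omr X))) ->
      forall (psi : V) (X : A), exists Q1 Q2 : V, forall t : k,
        let xit := kscale t xi in
        let psit := psi - phi xit psi in
        let T1 := phi (nab (rho X)) psi in
        let T2 := phi (tau omh (omr X)) psi in
        phi (nabt t (rho X)) psit = T1 - phi xit T1 + kscale (t ^+ 2) Q1 /\
        phi (tau (gauge br omh xit) (omr X)) psit
          = T2 - phi xit T2 + kscale (t ^+ 2) Q2].
Proof.
move=> [_ [brD brZ brN _] [_ rhoL] _ _] _ [phiOp phiL phiB] [omhL omhK] _ _ _ Hnab.
have phiL' : forall v, forall (a : R) X Y, phi (a *: X + Y) v = a *: phi X v + phi Y v.
  by move=> v a X Y; apply: phiL.
have rhoD : forall g X Y, rho (X + Y) g = rho X g + rho Y g.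
  by move=> g X Y; have := rhoL 1 X Y g; rewrite scale1r mul1r.
split.
- split.
  + move=> psi a X Y; rewrite /cov_deriv /hatC omhL.
    have -> : a *: X + Y + (a *: omh X + omh Y) = a *: (X + omh X) + (Y + omh Y).
      by rewrite scalerDr addrACA.
    by rewrite phiL.
  + move=> f psi X; rewrite /cov_deriv /hatC.
    have [_ _ _ ->] := phiOp (X + omh X).
    by rewrite rhoD omhK addr0.
- move=> psi X; rewrite /cov_deriv /hatC.
  have E := rearr (Hnab X).
  have -> : X + omh X = nab (rho X) - tau omh (omr X).
    by rewrite E addrA addrK.
  by rewrite (linD (phiL' psi)) (linN (phiL' psi)).
- move=> xi _ nabt Hnabt psi X.
  have EN := rearr (Hnab X).
  exists (- phi (br (nab (rho X)) xi) (phi xi psi)),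
         (- phi (br (tau omh (omr X)) xi) (phi xi psi)).
  move=> t /=; split.
  + have E : nabt t (rho X) = nab (rho X) + kscale t (br (nab (rho X)) xi).
      rewrite (rearr ((Hnabt t).2 X)) EN /gauge /tau !brD !(brZr _ brZ brN) /kscale !scalerDr.
      exact: ac8.
    by rewrite E (key br _ _ phiOp phiL phiB).
  + have E : tau (gauge br omh (kscale t xi)) (omr X) = tau omh (omr X) + kscale t (br (tau omh (omr X)) xi).
      rewrite /gauge /tau !brD !(brZr _ brZ brN) /kscale !scalerDr.
      exact: ac4.
    by rewrite E (key br _ _ phiOp phiL phiB).
Qed.
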